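(* Let $a,b$ be a parallel pair of a regular curve $M$ such that neither $a$ nor $b$ is an inflexion point. If $M$ is curved in the different sides at $a$ and $b$, then the pair $a,b$ cannot produce an asymptote of $\mathrm{CSS}(M)$.
   Context: Two distinct points $a,b\in M$ form a parallel pair if their tangent lines are parallel. $\tau_v$ denotes translation by $v$. $M$ is curved in the same side (resp. different sides) at $a$ and $b$ if the germs of $M$ and $\tau_{a-b}(M)$ at $a=\tau_{a-b}(b)$ lie on the same side (resp. different sides) of the tangent line to $M$ at $a$. The Centre Symmetry Set $\mathrm{CSS}(M)$ is the envelope of lines through parallel pairs. A parallel pair $a,b$ produces an asymptote of $\mathrm{CSS}(M)$ if, for local arc-length parameterizations $f$ near $a=f(s)$ and $g$ near $b=g(t)$ chosen with $f'(s)=-g'(t)$, one has $\kappa_f(s)+\kappa_g(t)=0$ ($\kappa$ the signed curvature); then the line through $a,b$ is an asymptote of $\mathrm{CSS}(M)$. *)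

(* Defs.v *)
From Stdlib Require Import Reals Lra.
From Coquelicot Require Import Coquelicot.
Open Scope R_scope.

Definition pt := (R * R)%type.

Definition vsub (p q : pt) : pt := (fst p - fst q, snd p - snd q).
Definition vadd (p q : pt) : pt := (fst p + fst q, snd p + snd q).
Definition vopp (p : pt) : pt := (- fst p, - snd p).
Definition dot (p q : pt) : R := fst p * fst q + snd p * snd q.
Definition det2 (p q : pt) : R := fst p * snd q - snd p * fst q.
Definition dist2 (p q : pt) : R := sqrt (dot (vsub p q) (vsub p q)).

Definition cx (f : R -> pt) : R -> R := fun u => fst (f u).
Definition cy (f : R -> pt) : R -> R := fun u => snd (f u).

Definition vel (f : R -> pt) (u : R) : pt := (Derive (cx f) u, Derive (cy f) u).

(* signed curvature of a (unit speed) curve: det(f', f'') = x' y'' - y' x'' *)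
Definition curvature (f : R -> pt) (u : R) : R :=
  Derive (cx f) u * Derive_n (cy f) 2 u - Derive (cy f) u * Derive_n (cx f) 2 u.

Definition local_arclength_param (M : pt -> Prop) (f : R -> pt) (s : R) (p : pt) : Prop :=
  exists lo hi : R,
    lo < s < hi /\
    f s = p /\
    (forall (n : nat) (u : R), lo < u < hi ->
        ex_derive_n (cx f) n u /\ ex_derive_n (cy f) n u) /\
    (forall u : R, lo < u < hi -> dot (vel f u) (vel f u) = 1) /\
    (forall u v : R, lo < u < hi -> lo < v < hi -> f u = f v -> u = v) /\
    (forall u : R, lo < u < hi -> M (f u)) /\
    (exists eps : R, 0 < eps /\
       forall q : pt, M q -> dist2 q p < eps -> exists u : R, lo < u < hi /\ f u = q).

Definition regular_curve (M : pt -> Prop) : Prop :=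
  forall p : pt, M p -> exists (f : R -> pt) (s : R), local_arclength_param M f s p.

Definition inflexion (M : pt -> Prop) (p : pt) : Prop :=
  exists (f : R -> pt) (s : R), local_arclength_param M f s p /\ curvature f s = 0.

Definition parallel_pair (M : pt -> Prop) (a b : pt) : Prop :=
  a <> b /\ M a /\ M b /\
  exists (f g : R -> pt) (s t : R),
    local_arclength_param M f s a /\ local_arclength_param M g t b /\
    det2 (vel f s) (vel g t) = 0.

Definition translate (v : pt) (S : pt -> Prop) : pt -> Prop :=
  fun x => exists y, S y /\ x = vadd y v.

Definition germ_on_side (S : pt -> Prop) (p n : pt) : Prop :=
  exists eps : R, 0 < eps /\
    forall x : pt, S x -> dist2 x p < eps -> 0 <= dot (vsub x p) n.

(* M is curved in different sides at a and b: the germs of M and of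
   tau_{a-b}(M) at a lie on different sides of the tangent line to M at a *)
Definition curved_different_sides (M : pt -> Prop) (a b : pt) : Prop :=
  exists (f : R -> pt) (s : R) (n : pt),
    local_arclength_param M f s a /\
    n <> (0, 0) /\ dot n (vel f s) = 0 /\
    germ_on_side M a n /\ germ_on_side (translate (vsub a b) M) a (vopp n).

Definition produces_asymptote (M : pt -> Prop) (a b : pt) : Prop :=
  exists (f g : R -> pt) (s t : R),
    local_arclength_param M f s a /\ local_arclength_param M g t b /\
    vel f s = vopp (vel g t) /\
    curvature f s + curvature g t = 0.

(* Main.v *)
Require Import Defs.
From Stdlib Require Import Reals Lra.
From Coquelicot Require Import Coquelicot.
Open Scope R_scope.

Lemma lin_derive (X Y : R -> R) u px py mx my :
  ex_derive X u -> ex_derive Y u ->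
  derivable_pt_lim (fun v => (X v - px)*mx + (Y v - py)*my) u
    (Derive X u * mx + Derive Y u * my).
Proof.
  intros hX hY.
  apply is_derive_Reals.
  pose proof (is_derive_plus _ _ _ _ _
     (is_derive_scal_l _ _ _ mx (is_derive_minus _ _ _ _ _ (Derive_correct _ _ hX) (is_derive_const px u)))
     (is_derive_scal_l _ _ _ my (is_derive_minus _ _ _ _ _ (Derive_correct _ _ hY) (is_derive_const py u)))) as H.
  simpl in H. unfold plus, scal, minus, zero, opp, mult in H; simpl in H.
  unfold mult in H; simpl in H.
  replace (Derive X u * mx + Derive Y u * my) with
   ((Derive X u + - 0) * mx + (Derive Y u + - 0) * my) by ring.
  exact H.
Qed.

Lemma min2 (phi D1 : R -> R) (s D2 delta : R) : 0 < delta ->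
  (forall u, Rabs (u - s) < delta -> derivable_pt_lim phi u (D1 u)) ->
  derivable_pt_lim D1 s D2 -> phi s = 0 ->
  (forall u, Rabs (u - s) < delta -> 0 <= phi u) -> D1 s = 0 /\ 0 <= D2.
Proof.
  intros hd hphi hD1 h0 hpos.
  assert (E1 : D1 s = 0).
  { destruct (Rtotal_order (D1 s) 0) as [Hl|[He|Hg]]; [exfalso| exact He | exfalso].
    - assert (Hs : derivable_pt_lim phi s (D1 s)) by (apply hphi; rewrite Rminus_diag, Rabs_R0; lra).
      destruct (Hs (- D1 s)) as [d Hd]; [lra|].
        set (h := Rmin (d/2) (delta/2)).
        assert (hp : 0 < h) by (unfold h; apply Rmin_glb_lt; destruct d; simpl; lra).
        assert (hd1 : h < d) by (unfold h; pose proof (Rmin_l (d/2) (delta/2)); destruct d; simpl in *; lra).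
        assert (hd2 : h < delta) by (unfold h; pose proof (Rmin_r (d/2) (delta/2)); lra).
        specialize (Hd h).
        assert (Hq : Rabs ((phi (s + h) - phi s) / h - D1 s) < - D1 s).
        { apply Hd; [lra| rewrite Rabs_pos_eq; lra]. }
        assert (P : 0 <= phi (s+h)) by (apply hpos; replace (s+h-s) with h by ring; rewrite Rabs_pos_eq; lra).
        rewrite h0, Rminus_0_r in Hq.
        assert (0 <= phi (s+h) / h) by (apply Rdiv_le_0_compat; lra).
        apply Rabs_def2 in Hq; lra.
    - assert (Hs : derivable_pt_lim phi s (D1 s)) by (apply hphi; rewrite Rminus_diag, Rabs_R0; lra).
      destruct (Hs (D1 s)) as [d Hd]; [lra|].
        set (h := Rmin (d/2) (delta/2)).
        assert (hp : 0 < h) by (unfold h; apply Rmin_glb_lt; destruct d; simpl; lra).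
        assert (hd1 : h < d) by (unfold h; pose proof (Rmin_l (d/2) (delta/2)); destruct d; simpl in *; lra).
        assert (hd2 : h < delta) by (unfold h; pose proof (Rmin_r (d/2) (delta/2)); lra).
        specialize (Hd (-h)).
        assert (Hq : Rabs ((phi (s + -h) - phi s) / -h - D1 s) < D1 s).
        { apply Hd; [lra| rewrite Rabs_Ropp, Rabs_pos_eq; lra]. }
        assert (P : 0 <= phi (s+-h)) by (apply hpos; replace (s+-h-s) with (-h) by ring; rewrite Rabs_Ropp, Rabs_pos_eq; lra).
        rewrite h0, Rminus_0_r in Hq.
        assert (0 <= phi (s+-h) / h) by (apply Rdiv_le_0_compat; lra).
        replace (phi (s + - h) / - h) with (- (phi (s + - h) / h)) in Hq by (field; lra).
        apply Rabs_def2 in Hq; lra. }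
  split; [exact E1|].
  destruct (Rle_or_lt 0 D2) as [H|H]; [exact H|exfalso].
  destruct (hD1 (- D2)) as [d Hd]; [lra|].
  set (h := Rmin (d/2) (delta/2)).
  assert (hp : 0 < h) by (unfold h; apply Rmin_glb_lt; destruct d; simpl; lra).
  assert (hd1 : h < d) by (unfold h; pose proof (Rmin_l (d/2) (delta/2)); destruct d; simpl in *; lra).
  assert (hd2 : h < delta) by (unfold h; pose proof (Rmin_r (d/2) (delta/2)); lra).
  destruct (MVT_cor2 phi D1 s (s+h)) as [c [Hc1 Hc2]]; [lra| |].
  { intros c Hc. apply hphi. apply Rabs_def1; lra. }
  assert (Hq : Rabs ((D1 (s + (c - s)) - D1 s) / (c - s) - D2) < - D2).
  { apply Hd; [lra| rewrite Rabs_pos_eq; lra]. }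
  replace (s + (c - s)) with c in Hq by ring.
  rewrite E1, Rminus_0_r in Hq.
  apply Rabs_def2 in Hq.
  assert (D1 c < 0).
  { assert (D1 c / (c - s) < 0) by lra.
    destruct (Rle_or_lt 0 (D1 c)) as [K|K]; [|exact K].
    assert (0 <= D1 c / (c - s)) by (apply Rdiv_le_0_compat; lra). lra. }
  assert (P : 0 <= phi (s+h)) by (apply hpos; replace (s+h-s) with h by ring; rewrite Rabs_pos_eq; lra).
  rewrite h0 in Hc1.
  assert (D1 c * (s + h - s) < 0) by (apply Rmult_neg_pos; lra).
  lra.
Qed.

Lemma cont_eps (X : R -> R) s : ex_derive X s ->
  forall e, 0 < e -> exists d, 0 < d /\ forall u, Rabs (u - s) < d -> Rabs (X u - X s) < e.
Proof.
  intros hX e he.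
  pose proof (derivable_continuous_pt _ _ (ex_derive_Reals_0 _ _ hX)) as C.
  unfold continuity_pt, continue_in, limit1_in, limit_in in C. simpl in C.
  destruct (C e he) as [d [hd Hd]]. exists d; split; [exact hd|].
  intros u hu. destruct (Req_dec u s) as [->|hne].
  - rewrite Rminus_diag, Rabs_R0; lra.
  - apply Hd. split; [unfold D_x, no_cond; split; [exact I| congruence]| exact hu].
Qed.

Lemma sq_lt a e : Rabs a < e -> a * a < e * e.
Proof. intros H. pose proof (Rabs_pos a). rewrite <- (Rabs_pos_eq (a*a)) by nra.
  rewrite Rabs_mult. nra. Qed.

Lemma key (X Y : R -> R) s lo hi px py mx my eps :
 lo < s < hi -> (forall n u, lo < u < hi -> ex_derive_n X n u /\ ex_derive_n Y n u) ->
 X s = px -> Y s = py -> 0 < eps ->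
 (forall u, lo < u < hi -> sqrt ((X u - px)*(X u - px) + (Y u - py)*(Y u - py)) < eps ->
    0 <= (X u - px)*mx + (Y u - py)*my) ->
 Derive X s * mx + Derive Y s * my = 0 /\
 0 <= Derive_n X 2 s * mx + Derive_n Y 2 s * my.
Proof.
  intros hs hder hX hY he hpos.
  destruct (hder 1%nat s hs) as [X1 Y1].
  destruct (hder 2%nat s hs) as [X2 Y2].
  destruct (cont_eps X s X1 (eps/2)) as [d1 [hd1 H1]]; [lra|].
  destruct (cont_eps Y s Y1 (eps/2)) as [d2 [hd2 H2]]; [lra|].
  set (delta := Rmin (Rmin d1 d2) (Rmin (s - lo) (hi - s))).
  assert (hdp : 0 < delta) by (unfold delta; repeat apply Rmin_glb_lt; lra).
  assert (hdl : delta <= d1 /\ delta <= d2 /\ delta <= s - lo /\ delta <= hi - s).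
  { unfold delta. pose proof (Rmin_l (Rmin d1 d2) (Rmin (s - lo) (hi - s))).
    pose proof (Rmin_r (Rmin d1 d2) (Rmin (s - lo) (hi - s))).
    pose proof (Rmin_l d1 d2). pose proof (Rmin_r d1 d2).
    pose proof (Rmin_l (s-lo) (hi-s)). pose proof (Rmin_r (s-lo) (hi-s)). lra. }
  assert (Hin : forall u, Rabs (u - s) < delta -> lo < u < hi).
  { intros u hu. apply Rabs_def2 in hu. lra. }
  apply (min2 (fun v => (X v - px)*mx + (Y v - py)*my)
               (fun v => Derive X v * mx + Derive Y v * my) s _ delta hdp).
  - intros u hu. destruct (hder 1%nat u (Hin u hu)) as [A B].
    apply lin_derive; assumption.
  - apply (lin_derive (Derive X) (Derive Y) s 0 0 mx my) in X2; [|exact Y2].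
    eapply derivable_pt_lim_ext; [|exact X2]. intros v; simpl; ring.
  - simpl. rewrite hX, hY. ring.
  - intros u hu. apply hpos; [apply Hin; exact hu|].
    assert (A : Rabs (X u - px) < eps/2) by (rewrite <- hX; apply H1; lra).
    assert (B : Rabs (Y u - py) < eps/2) by (rewrite <- hY; apply H2; lra).
    assert (A2 : (X u - px)*(X u - px) < eps/2*(eps/2)).
    { apply sq_lt; exact A. }
    assert (B2 : (Y u - py)*(Y u - py) < eps/2*(eps/2)).
    { apply sq_lt; exact B. }
    rewrite <- (sqrt_Rsqr eps) by lra.
    apply sqrt_lt_1_alt. pose proof (Rle_0_sqr (X u - px)); pose proof (Rle_0_sqr (Y u - py)); unfold Rsqr in *. assert (0 < eps*eps) by (apply Rmult_lt_0_compat; lra). split; lra.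
Qed.

Theorem lemma4p6 (M : pt -> Prop) (a b : pt) :
  regular_curve M ->
  parallel_pair M a b ->
  ~ inflexion M a ->
  ~ inflexion M b ->
  curved_different_sides M a b ->
  ~ produces_asymptote M a b.
Proof.
  intros _ _ hia _ [f0 [s0 [n [_ [hn0 [_ [[e1 [he1 HMa]] [e2 [he2 HTa]]]]]]]]]
    [f [g [s [t [Lf [Lg [hvel hcurv]]]]]]].
  pose proof Lf as Lf'.
  destruct Lf as [lo [hi [hs [fsa [hder [hunit [_ [hM _]]]]]]]].
  destruct Lg as [lo' [hi' [ht [gtb [hder' [hunit' [_ [hM' _]]]]]]]].
  destruct (key (cx f) (cy f) s lo hi (fst a) (snd a) (fst n) (snd n) e1 hs hder)
    as [Kf1 Kf2]; [unfold cx; rewrite fsa; reflexivity|unfold cy; rewrite fsa; reflexivity|exact he1| |].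
  { intros u hu hd. specialize (HMa (f u) (hM u hu) hd). exact HMa. }
  destruct (key (cx g) (cy g) t lo' hi' (fst b) (snd b) (- fst n) (- snd n) e2 ht hder')
    as [Kg1 Kg2]; [unfold cx; rewrite gtb; reflexivity|unfold cy; rewrite gtb; reflexivity|exact he2| |].
  { intros u hu hd.
    assert (Hx : translate (vsub a b) M (vadd (g u) (vsub a b))) by (exists (g u); split; [apply hM'; exact hu| reflexivity]).
    assert (Hd : dist2 (vadd (g u) (vsub a b)) a < e2).
    { unfold dist2, dot, vsub, vadd; simpl.
      replace (fst (g u) + (fst a - fst b) - fst a) with (cx g u - fst b) by (unfold cx; ring).
      replace (snd (g u) + (snd a - snd b) - snd a) with (cy g u - snd b) by (unfold cy; ring).
      exact hd. }
    specialize (HTa _ Hx Hd). unfold dot, vsub, vadd, vopp in HTa; simpl in HTa.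
    unfold cx, cy. lra. }
  specialize (hunit s hs). unfold vel, dot in hunit, hvel; simpl in hunit.
  injection hvel as hv1 hv2.
  unfold curvature in hcurv.
  rewrite hv1, hv2 in Kf1. rewrite hv1, hv2 in hunit. rewrite hv1, hv2 in hcurv.
  set (tx := Derive (cx g) t) in *. set (ty := Derive (cy g) t) in *.
  set (nx := fst n) in *. set (ny := snd n) in *.
  set (c := - ny * tx + nx * ty).
  assert (P1 : nx * (- tx * - tx + - ty * - ty) = nx * 1) by (rewrite hunit; ring).
  assert (P2 : ny * (- tx * - tx + - ty * - ty) = ny * 1) by (rewrite hunit; ring).
  assert (P3 : tx * (- tx * nx + - ty * ny) = 0) by (rewrite Kf1; ring).
  assert (P4 : ty * (- tx * nx + - ty * ny) = 0) by (rewrite Kf1; ring).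
  assert (Enx : nx = - c * - ty) by (unfold c; lra).
  assert (Eny : ny = c * - tx) by (unfold c; lra).
  assert (hc : c <> 0).
  { intros hc0. apply hn0. rewrite hc0 in Enx, Eny.
    destruct n as [p q]; simpl in *. unfold nx, ny in *. f_equal; lra. }
  set (kf := - tx * Derive_n (cy f) 2 s - - ty * Derive_n (cx f) 2 s) in *.
  set (kg := tx * Derive_n (cy g) 2 t - ty * Derive_n (cx g) 2 t) in *.
  assert (A1 : 0 <= c * kf).
  { unfold kf. replace (c * (- tx * Derive_n (cy f) 2 s - - ty * Derive_n (cx f) 2 s))
      with (Derive_n (cx f) 2 s * nx + Derive_n (cy f) 2 s * ny) by (rewrite Enx, Eny; ring). exact Kf2. }
  assert (A2 : 0 <= c * kg).
  { unfold kg. replace (c * (tx * Derive_n (cy g) 2 t - ty * Derive_n (cx g) 2 t))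
      with (Derive_n (cx g) 2 t * - nx + Derive_n (cy g) 2 t * - ny) by (rewrite Enx, Eny; ring). exact Kg2. }
  assert (Z0 : c * kf + c * kg = 0) by (rewrite <- Rmult_plus_distr_l, hcurv; ring).
  assert (Z : c * kf = 0) by lra.
  apply hia. exists f, s. split; [exact Lf'|].
  unfold curvature. rewrite hv1, hv2.
  destruct (Rmult_integral _ _ Z) as [Z1|Z1]; [contradiction|].
  exact Z1.
Qed.
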